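(* Let $A$ be a $d\times n$ matrix with non-negative integer entries such that each standard basis vector $\mathbf e_1,\dots,\mathbf e_d$ of $\mathbb Z^d$ appears as a column of $A$. Let $\mathbf c$ be a column of $A$ and $I=\{k: c_k>0,\ 1\le k\le d\}$. For $i\in I$, let $E^{(i)}$ be the matrix obtained from $A$ by replacing the column $\mathbf c$ with $\mathbf e_i$. Then $p_{E^{(i)}}(\mathbf b)\ge p_A(\mathbf b)$ for all $\mathbf b\in\mathbb Z^d_{\ge0}$.
   Context: For an integer matrix $M$ with $r$ columns and $\mathbf b$ a vector, $p_M(\mathbf b)=\#\{\mathbf x\in\mathbb Z^r_{\ge0}:M\mathbf x=\mathbf b\}$ (the vector partition function, counted as a cardinality). *)

(* Defs.v *)
From mathcomp Require Import all_boot all_algebra.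
From mathcomp Require Import boolp classical_sets cardinality.
Set Implicit Arguments. Unset Strict Implicit. Unset Printing Implicit Defensive.

(* Solution set of M x = b with x in Z_{>=0}^r; p_M(b) is its cardinality. *)
Definition vpsol (d r : nat) (M : 'M[nat]_(d, r)) (b : 'I_d -> nat) : set ('I_r -> nat) :=
  [set x | forall i : 'I_d, (\sum_(j < r) M i j * x j)%N = b i].

Definition replace_col (d n : nat) (A : 'M[nat]_(d, n)) (jc : 'I_n) (k : 'I_d) : 'M[nat]_(d, n) :=
  \matrix_(r < d, j < n) (if j == jc then nat_of_bool (r == k) else A r j).

(* Main.v *)
Require Import Defs.
From mathcomp Require Import all_boot all_algebra.
From mathcomp Require Import boolp classical_sets functions cardinality.

Theorem mainTheorem17 (d n : nat) (A : 'M[nat]_(d, n))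
  (hE : forall k : 'I_d, exists j : 'I_n, forall r : 'I_d, A r j = nat_of_bool (r == k))
  (jc : 'I_n) (i : 'I_d) (hi : (0 < A i jc)%N) (b : 'I_d -> nat) :
  (vpsol A b #<= vpsol (replace_col A jc i) b)%card.
Proof.
have [J HJ] : exists J : 'I_d -> 'I_n, forall k r, A r (J k) = nat_of_bool (r == k).
  by exists (fun k => projT1 (cid (hE k))) => k; exact: (projT2 (cid (hE k))).
have Jne : forall k, k != i -> J k != jc.
  move=> k ki; apply/eqP => E; move: hi; rewrite -E HJ.
  by rewrite eq_sym (negbTE ki).
pose S (j : 'I_n) := (\sum_(k < d | k != i) (j == J k) * A k jc)%N.
pose f (x : 'I_n -> nat) := fun j : 'I_n =>
  if j == jc then (A i jc * x jc)%N else (x j + x jc * S j)%N.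
apply/pcard_leP; apply/injfunPex; exists f.
- move=> x /= hx r; rewrite -(hx r).
  rewrite (bigD1 jc) //= [in RHS](bigD1 jc) //= /f /replace_col !mxE eqxx.
  under eq_bigr => j jn do rewrite mxE (negbTE jn) mulnDr.
  rewrite big_split /= addnCA [RHS]addnC; congr addn.
  have -> : (\sum_(j < n | j != jc) A r j * (x jc * S j))%N
          = (x jc * ((r != i) * A r jc))%N.
    under eq_bigr => j _ do rewrite mulnCA.
    rewrite -big_distrr /=; congr muln.
    rewrite /S.
    under eq_bigr => j _ do rewrite big_distrr /=.
    rewrite exchange_big /=.
    have -> : (\sum_(k < d | k != i) \sum_(j < n | j != jc) A r j * ((j == J k) * A k jc))%N
            = (\sum_(k < d | k != i) (r == k) * A k jc)%N.
      apply: eq_bigr => k ki.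
      rewrite (bigD1 (J k)) ?Jne //= eqxx mul1n HJ big1 ?addn0 //.
      by move=> j /andP[_ /negbTE ->]; rewrite mul0n muln0.
    case: (eqVneq r i) => [->|ri].
      by rewrite big1 // => k ki; rewrite eq_sym (negbTE ki).
    rewrite (bigD1 r) //= eqxx mul1n big1 ?addn0 //.
    by move=> k /andP[_ /negbTE]; rewrite eq_sym => ->.
  case: (eqVneq r i) => [->|ri]; rewrite ?eqxx ?ri /=.
    by rewrite mul1n mul0n muln0 addn0 mulnC.
  by rewrite mul0n add0n mul1n mulnC.
- move=> x y _ _ /= E.
  have Ejc : x jc = y jc.
    have := congr1 (fun g => g jc) E; rewrite /f eqxx => /eqP.
    by rewrite eqn_pmul2l // => /eqP.
  apply/funext => j; case: (eqVneq j jc) => [->//|jn].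
  have := congr1 (fun g => g j) E; rewrite /f (negbTE jn) Ejc.
  by move/addIn.
Qed.
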